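(* Let $\lambda_\pm:V_0\to(0,\infty)$, $\rho_B=\frac{\lambda_+}{\lambda_++\lambda_-}$, $\rho_*=\min_{V_0}\rho_B$, $\rho^*=\max_{V_0}\rho_B$, and let $\varrho:K\to\mathbb R$ satisfy $\varrho\in\mathcal F$, $\varrho|_{V_0}=\rho_B$, $\min_K\varrho=\rho_*$, $\max_K\varrho=\rho^*$. Then there is a constant $C>0$ depending only on $\rho_B$ and $\|c\|_\infty$ such that for every $N\ge1$ and every $\psi:\Omega_N\to\mathbb R$ with $\psi^2$ a density with respect to $\nu_\varrho$, \[ \big\langle\psi,-5^{-N}\mathcal L_N^G\psi\big\rangle_{\nu_\varrho}\ge -C\Big(\frac35\Big)^N. \]
   Context: Sierpiński gasket: $a_0=(\tfrac12,\tfrac{\sqrt3}2)$, $a_1=(0,0)$, $a_2=(1,0)$, $V_0=\{a_0,a_1,a_2\}$, $\varphi_i(x)=(x+a_i)/2$, $K$ the unique nonempty compact set with $K=\bigcup_i\varphi_i(K)$; for words $w$ over $\{0,1,2\}$, $\varphi_w$ is the composition of the $\varphi_{w_i}$. $V_N=\bigcup_{|w|=N}\varphi_w(V_0)$, $x\sim y$ ($x\ne y$) iff $x,y\in\varphi_w(V_0)$ for some $|w|=N$; $V_N^0=V_N\setminus V_0$; $L(x,y)$ graph distance on $V_N$. $\mathcal E_N(f)=\frac12(\frac53)^N\sum_{x\in V_N}\sum_{y\sim x}(f(y)-f(x))^2$, $\mathcal E=\lim_N\mathcal E_N$, $\mathcal F=\{f:K\to\mathbb R:\mathcal E(f)<\infty\}\subset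 C(K)$. $\Omega_N=\{0,1\}^{V_N}$; $\eta^x$ is $\eta$ with the value at $x$ flipped. $\nu_\varrho$ is the product measure on $\Omega_N$ with $\nu_\varrho(\eta(x)=1)=\varrho(x)$; $\langle\cdot,\cdot\rangle_{\nu_\varrho}$ its $L^2$ inner product; a nonnegative $f$ is a density w.r.t. $\nu_\varrho$ if $E_{\nu_\varrho}[f]=1$. $\mathcal L_N^G\varphi(\eta)=\sum_{x\in V_N^0}c_x(\eta)[\varphi(\eta^x)-\varphi(\eta)]$, where the rates satisfy: for a fixed integer $L_0\ge1$, with $\Lambda_x=\{y\in V_N:L(x,y)\le L_0\}$ and $\mathcal S=\{2^N(\Lambda_x-x):x\in V_N^0\}$ (independent of $N$ for large $N$), there are functions $c(\cdot;\Lambda):\{0,1\}^\Lambda\to(0,\infty)$, $\Lambda\in\mathcal S$, with $c_x(\eta)=c(\eta|_{\Lambda_x};2^N(\Lambda_x-x))$ for all large $N$; $\|c\|_\infty:=\max_{\Lambda\in\mathcal S}\max_{\xi\in\{0,1\}^\Lambda}c(\xi;\Lambda)$. *)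

(* Defs.v *)
From HB Require Import structures.
From mathcomp Require Import all_boot all_order all_algebra.
From mathcomp Require Import all_classical all_reals all_analysis.
Set Implicit Arguments. Unset Strict Implicit. Unset Printing Implicit Defensive.
Import Order.TTheory GRing.Theory Num.Theory numFieldNormedType.Exports.
Local Open Scope ring_scope.
Local Open Scope classical_set_scope.

Section Gasket.
Variable R : realType.
Notation P := (R * R)%type.

Definition avert (i : 'I_3) : P :=
  if val i == 0%N then (2^-1, Num.sqrt 3 / 2)
  else if val i == 1%N then (0, 0) else (1, 0).

Definition V0 : seq P := [seq avert i | i : 'I_3].

Definition phi (i : 'I_3) (x : P) : P :=
  ((x.1 + (avert i).1) / 2, (x.2 + (avert i).2) / 2).

Definition phiw (w : seq 'I_3) (x : P) : P := foldr phi x w.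

Definition is_gasket (K : set P) : Prop :=
  compact K /\ K !=set0 /\ K = \bigcup_(i in [set: 'I_3]) (phi i @` K).

Definition cell (w : seq 'I_3) : seq P := [seq phiw w (avert i) | i : 'I_3].

Definition VN (N : nat) : seq P :=
  undup (flatten [seq cell (val w) | w : N.-tuple 'I_3]).

Definition adj (N : nat) (x y : P) : Prop :=
  x <> y /\ exists w : N.-tuple 'I_3, x \in cell (val w) /\ y \in cell (val w).

Definition EN (N : nat) (f : P -> R) : R :=
  2^-1 * (5 / 3) ^+ N *
  \sum_(x <- VN N) \sum_(y <- VN N | `[< adj N x y >]) (f y - f x) ^+ 2.

Definition in_F (f : P -> R) : Prop :=
  exists l : R, (fun n => EN n f) @ \oo --> l.

Fixpoint walk (N : nat) (x : P) (p : seq P) (y : P) : Prop :=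
  match p with
  | [::] => x = y
  | z :: p' => adj N x z /\ walk N z p' y
  end.

Definition Lambda (N L0 : nat) (x : P) : set P :=
  [set y | y \in VN N /\ exists p : seq P, (size p <= L0)%N /\ walk N x p y].

Definition shape (N L0 : nat) (x : P) : set P :=
  [set ((2 ^+ N) * (y.1 - x.1), (2 ^+ N) * (y.2 - x.2)) | y in Lambda N L0 x].

Definition VT (N : nat) := seq_sub (VN N).
Definition Omega (N : nat) := {ffun VT N -> bool}.

Definition flip N (eta : Omega N) (x : VT N) : Omega N :=
  [ffun y => if y == x then ~~ eta y else eta y].

(* value of a configuration at an arbitrary point (false off V_N) *)
Definition evc N (eta : Omega N) (p : P) : bool :=
  if insub p is Some q then eta q else false.

Definition rate_family (c : set P -> (P -> bool) -> R) : Prop :=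
  (forall L xi, 0 < c L xi) /\
  (forall L xi xi', (forall z, L z -> xi z = xi' z) -> c L xi = c L xi').

(* c_x(eta) = c(eta|_{Lambda_x}; 2^N(Lambda_x - x)), transported to the shape *)
Definition rate (c : set P -> (P -> bool) -> R) N L0 (x : VT N) (eta : Omega N) : R :=
  c (shape N L0 (val x))
    (fun z => evc eta ((val x).1 + z.1 / 2 ^+ N, (val x).2 + z.2 / 2 ^+ N)).

Definition cnorm (c : set P -> (P -> bool) -> R) (L0 : nat) : R :=
  sup [set v | exists N (x : P) (xi : P -> bool),
          (1 <= N)%N /\ x \in VN N /\ x \notin V0 /\ v = c (shape N L0 x) xi].

Definition LG (c : set P -> (P -> bool) -> R) N L0 (phi0 : Omega N -> R)
  (eta : Omega N) : R :=
  \sum_(x : VT N | val x \notin V0) rate c L0 x eta * (phi0 (flip eta x) - phi0 eta).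

Definition nu N (varrho : P -> R) (eta : Omega N) : R :=
  \prod_(x : VT N) (if eta x then varrho (val x) else 1 - varrho (val x)).

Definition Enu N (varrho : P -> R) (f : Omega N -> R) : R :=
  \sum_(eta : Omega N) nu varrho eta * f eta.

Definition inner N (varrho : P -> R) (f g : Omega N -> R) : R :=
  Enu varrho (fun eta => f eta * g eta).

End Gasket.

(* Main.v *)
Require Import Defs.
From HB Require Import structures.
From mathcomp Require Import all_boot all_order all_algebra.
From mathcomp Require Import all_classical all_reals all_analysis.
From mathcomp Require Import ring lra zify.
Import Order.TTheory GRing.Theory Num.Theory numFieldNormedType.Exports.
Local Open Scope ring_scope.
Local Open Scope classical_set_scope.

Section Aux.
Variable R : realType.
Notation P := (R * R)%type.

Definition pt (i j : int) : P := (i%:~R * 2^-1 + j%:~R, i%:~R * (Num.sqrt 3 / 2)).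

Definition ei (a : 'I_3) : int * int :=
  if val a == 0%N then (1, 0) else if val a == 1%N then (0, 0) else (0, 1).

Lemma avert_pt a : avert R a = pt (ei a).1 (ei a).2.
Proof.
case: a => [[|[|[|k]]] Hk] //; rewrite /avert /pt /ei /=; congr pair; rewrite ?mul0r ?mul1r ?addr0 ?add0r //.
Qed.

Lemma pt_add i j i' j' : pt (i + i') (j + j') = ((pt i j).1 + (pt i' j').1, (pt i j).2 + (pt i' j').2).
Proof. rewrite /pt /= !intrD; congr pair; ring. Qed.

Lemma ei_bound a b : `|(ei b).1 - (ei a).1| <= 1 /\ `|(ei b).2 - (ei a).2| <= 1.
Proof.
by case: a => [[|[|[|k]]] Hk] //; case: b => [[|[|[|k']]] Hk'].
Qed.

Lemma phiw_aff (w : seq 'I_3) : exists ab : P, forall p,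
  phiw w p = (ab.1 + p.1 / 2 ^+ size w, ab.2 + p.2 / 2 ^+ size w).
Proof.
elim: w => [|i w [ab IH]].
  by exists (0, 0) => -[p1 p2]; rewrite /= expr0 !divr1 !add0r.
exists ((ab.1 + (avert R i).1) / 2, (ab.2 + (avert R i).2) / 2) => p.
rewrite /= IH /phi /= exprS; congr pair; field; rewrite ?expf_neq0 // ?pnatr_eq0 // ?andbT.
Qed.

Lemma adj_step N (x y : P) : adj N x y -> exists i j : int,
  `|i| <= 1 /\ `|j| <= 1 /\ y = (x.1 + (pt i j).1 / 2 ^+ N, x.2 + (pt i j).2 / 2 ^+ N).
Proof.
move=> [_ [w [/mapP [a _ ->] /mapP [b _ ->]]]].
have [ab H] := phiw_aff (val w).
rewrite !H size_tuple !avert_pt.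
have [h1 h2] := ei_bound a b.
exists ((ei b).1 - (ei a).1), ((ei b).2 - (ei a).2); split => //; split => //.
have := pt_add (ei a).1 (ei a).2 ((ei b).1 - (ei a).1) ((ei b).2 - (ei a).2).
rewrite !addrA !(addrC (ei a).1) !(addrC (ei a).2) !addrK => ->.
rewrite /=; congr pair; rewrite mulrDl; ring.
Qed.

Lemma walk_lat N (p : seq P) : forall x y, walk N x p y -> exists i j : int,
  `|i| <= (size p)%:Z /\ `|j| <= (size p)%:Z /\
  y = (x.1 + (pt i j).1 / 2 ^+ N, x.2 + (pt i j).2 / 2 ^+ N).
Proof.
elim: p => [|z p IH] x y.
  move=> /= ->; exists 0, 0; do 2 split => //; rewrite /pt /= !mulr0z !(mul0r, add0r, addr0); by case: y.
case=> /adj_step [i1 [j1 [hi1 [hj1 ->]]]] /IH [i2 [j2 [hi2 [hj2 ->]]]].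
exists (i1 + i2), (j1 + j2); split; [|split].
- apply: le_trans (ler_normD _ _) _; rewrite /= -addn1 PoszD addrC; exact: lerD.
- apply: le_trans (ler_normD _ _) _; rewrite /= -addn1 PoszD addrC; exact: lerD.
- rewrite pt_add /=; congr pair; rewrite mulrDl; ring.
Qed.

Lemma shape_lat N L0 (x z : P) : Defs.shape N L0 x z -> exists i j : int,
  `|i| <= L0%:Z /\ `|j| <= L0%:Z /\ z = pt i j.
Proof.
move=> [y [_ [p [hp /walk_lat [i [j [hi [hj ->]]]]]]] <-].
exists i, j; split; [|split].
- by apply: le_trans hi _; rewrite lez_nat.
- by apply: le_trans hj _; rewrite lez_nat.
- have h2 : (2 : R) ^+ N != 0 by rewrite expf_neq0 // pnatr_eq0.
  have e : forall a t : R, 2 ^+ N * ((a + t / 2 ^+ N) - a) = t.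
    by move=> a t; field.
  by move: (pt i j) => q; rewrite /= !e; case: q.
Qed.

Notation idx L0 := ('I_(2 * L0 + 1) * 'I_(2 * L0 + 1))%type.
Definition ptI L0 (k : idx L0) : P := pt (k.1%:Z - L0%:Z) (k.2%:Z - L0%:Z).
Arguments ptI {L0}.
Definition realS L0 (S : {set idx L0}) : set P := [set z | exists k, k \in S /\ z = ptI k].
Definition extf L0 (f : {ffun idx L0 -> bool}) (z : P) : bool :=
  if [pick k | ptI k == z] is Some k then f k else false.

Arguments realS {L0}.
Arguments extf {L0}.
Lemma int_ord L0 (i : int) : `|i| <= L0%:Z -> exists k : 'I_(2 * L0 + 1), k%:Z - L0%:Z = i.
Proof.
move=> h.
have hk : (absz (i + L0%:Z)%R < 2 * L0 + 1)%N by lia.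
exists (Ordinal hk) => /=; lia.
Qed.

Lemma cbound (c : set P -> (P -> bool) -> R) L0 : rate_family c ->
  exists B, forall N (x : P) xi, c (Defs.shape N L0 x) xi <= B.
Proof.
move=> rfc.
exists (\sum_(S : {set idx L0}) \sum_(f : {ffun idx L0 -> bool}) c (realS S) (extf f)).
move=> N x xi; set L := Defs.shape N L0 x.
have hL : forall z, L z -> exists k : idx L0, ptI k = z.
  move=> z /shape_lat [i [j [hi [hj ->]]]].
  have [k1 e1] := int_ord _ _ hi; have [k2 e2] := int_ord _ _ hj.
  by exists (k1, k2); rewrite /ptI /= e1 e2.
pose S := finset (fun k : idx L0 => `[< L (ptI k) >]).
have eS : realS S = L.
  apply/seteqP; split => z.
  - by move=> [k [kS ->]]; move: kS; rewrite inE => /asboolP.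
  - move=> Lz; have [k ek] := hL z Lz; exists k; split => //.
    by rewrite inE; apply/asboolP; rewrite ek.
pose f : {ffun idx L0 -> bool} := [ffun k => xi (ptI k)].
have ef : forall z, L z -> xi z = extf f z.
  move=> z Lz; rewrite /extf; case: pickP => [k /eqP ek | none].
  - by rewrite ffunE ek.
  - by have [k ek] := hL z Lz; move: (none k); rewrite ek eqxx.
rewrite ((proj2 rfc) L xi (extf f) ef) -eS.
have h0 : forall (S' : {set idx L0}) (f' : {ffun idx L0 -> bool}), 0 <= c (realS S') (extf f') by move=> S' f'; exact: ltW ((proj1 rfc) _ _).
rewrite (bigD1 S) //= (bigD1 f) //=.
apply: ler_wpDr; first by apply: sumr_ge0 => S' _; apply: sumr_ge0.
apply: ler_wpDr; first by apply: sumr_ge0.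
exact: lexx.
Qed.
End Aux.


Lemma core (R : realFieldType) (T X : finType) (nu : T -> R) (c : X -> T -> R) (fl : X -> T -> T)
  (psi : T -> R) (Px : pred X) (r m : R) :
  (forall x, involutive (fl x)) -> (forall t, 0 <= nu t) ->
  (forall x t, 0 <= c x t) -> (forall x t, Px x -> c x t <= m) ->
  (forall x t, nu (fl x t) <= r * nu t) -> 0 <= r -> 0 <= m ->
  \sum_t nu t * psi t ^+ 2 = 1 ->
  \sum_t nu t * (psi t * \sum_(x | Px x) c x t * (psi (fl x t) - psi t))
    <= #|X|%:R * (r * m / 2).
Proof.
move=> inv nu0 c0 cm nur r0 m0 norm.
have step : forall x, Px x ->
    \sum_t nu t * c x t * (psi t * psi (fl x t) - psi t ^+ 2) <= r * m / 2.
  move=> x hPx.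
  apply: (@le_trans _ _ (\sum_t (nu t * c x t * psi (fl x t) ^+ 2 / 2
                                   - nu t * c x t * psi t ^+ 2 / 2))).
    apply: ler_sum => t _.
    have ha := mulr_ge0 (nu0 t) (c0 x t).
    have := mulr_ge0 ha (sqr_ge0 (psi t - psi (fl x t))).
    move: (nu t * c x t) ha => a ha h; nra.
  rewrite sumrB.
  have e : \sum_t nu t * c x t * psi (fl x t) ^+ 2 / 2
         = \sum_t nu (fl x t) * c x (fl x t) * psi t ^+ 2 / 2.
    rewrite (reindex_inj (can_inj (inv x))) /=.
    by apply: eq_bigr => t _; rewrite inv.
  rewrite e.
  have h2 : 0 <= \sum_t nu t * c x t * psi t ^+ 2 / 2.
    apply: sumr_ge0 => t _.
    apply: mulr_ge0; last by rewrite invr_ge0 ler0n.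
    apply: mulr_ge0; [exact: mulr_ge0 | exact: sqr_ge0].
  apply: (@le_trans _ _ (\sum_t nu (fl x t) * c x (fl x t) * psi t ^+ 2 / 2)).
    move: h2; set A := \sum_t _; set B := \sum_t _; lra.
  apply: (@le_trans _ _ (\sum_t r * m / 2 * (nu t * psi t ^+ 2))).
    apply: ler_sum => t _.
    have hp := sqr_ge0 (psi t).
    have h1 := nur x t.
    have h3 := cm x (fl x t) hPx.
    have h4 := nu0 (fl x t).
    have h5 := c0 x (fl x t).
    have h6 : nu (fl x t) * c x (fl x t) <= r * nu t * m.
      by apply: ler_pM.
    move: (nu (fl x t) * c x (fl x t)) h6 => a h6.
    rewrite -mulrA (mulrC _ 2^-1) mulrA.
    rewrite -!mulrA mulrC -!mulrA. 
    have : a * psi t ^+ 2 <= r * nu t * m * psi t ^+ 2 by apply: ler_wpM2r.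
    move=> h; nra.
  by rewrite -mulr_sumr norm mulr1.
apply: (@le_trans _ _ (\sum_(x | Px x) r * m / 2)); last first.
  have -> : #|X|%:R * (r * m / 2) = \sum_(x : X) r * m / 2 by rewrite sumr_const mulr_natl.
  rewrite big_mkcond /=.
  apply: ler_sum => x _; case: (Px x) => //.
  by rewrite !mulr_ge0 // invr_ge0 ler0n.
apply: (@le_trans _ _ (\sum_(x | Px x) \sum_t nu t * c x t * (psi t * psi (fl x t) - psi t ^+ 2))).
  rewrite exchange_big /=; apply: ler_sum => x _.
  rewrite /= mulr_sumr mulr_sumr; apply: ler_sum => t _.
  by rewrite le_eqVlt; apply/orP; left; apply/eqP; ring.
exact: ler_sum.
Qed.


Lemma geo_cvg (R : realType) (a b : R) : (a + b * (2^-1) ^+ n) @[n --> \oo] --> a.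
Proof.
have h : `|(2^-1 : R)| < 1.
  by rewrite ger0_norm ?invr_ge0 ?ler0n // invf_lt1 // ltr1n.
have := cvg_expr h.
move=> hc.
rewrite -[X in _ --> X]addr0.
apply: cvgD; first exact: cvg_cst.
rewrite -(mulr0 b).
apply: cvgM; [exact: cvg_cst | exact: hc].
Qed.

Lemma pair_cvg (R : realType) (u v : nat -> R) a b : u n @[n --> \oo] --> a -> v n @[n --> \oo] --> b ->
  (u n, v n) @[n --> \oo] --> ((a, b) : R * R).
Proof. move=> hu hv. by apply: (@cvg_pair _ _ _ _ (nbhs a) (nbhs b)). Qed.

Lemma phiK (R : realType) (K : set (R * R)) : is_gasket K ->
  forall i p, K p -> K (phi i p).
Proof.
move=> [_ [_ eK]] i p Kp; rewrite eK; exists i => //; by exists p.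
Qed.

Lemma avertK (R : realType) (K : set (R * R)) : is_gasket K -> forall i, K (avert R i).
Proof.
move=> gK i; have gK' := gK; case: gK' => cK [[k Kk] _].
pose u n := iter n (phi i) k.
have Ku : forall n, K (u n).
  by elim=> [|n IH] //=; apply: phiK.
have eu : forall n, u n = ((avert R i).1 + (k.1 - (avert R i).1) * (2^-1) ^+ n,
                          (avert R i).2 + (k.2 - (avert R i).2) * (2^-1) ^+ n).
  elim=> [|n IH]; first by rewrite /u /= {1}[k]surjective_pairing; congr pair; ring.
  rewrite /u /= -/(u n) IH /phi /= exprS; by congr pair; field.
have cl : closed K by apply: compact_closed => //; exact: ball_hausdorff.
have conv : u x @[x --> \oo] --> avert R i.
  have -> : u = fun n => ((avert R i).1 + (k.1 - (avert R i).1) * (2^-1) ^+ n,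
                          (avert R i).2 + (k.2 - (avert R i).2) * (2^-1) ^+ n).
    by apply: funext => m; rewrite eu.
  have -> : avert R i = ((avert R i).1, (avert R i).2) by case: (avert R i).
  apply: pair_cvg; exact: geo_cvg.
have Kn : \forall n \near \oo, K (u n) by exact: nearW.
by have := closed_cvg K cl Kn; move=> /(_ eventually_filter (avert R i) conv).
Qed.

Lemma VNK (R : realType) (K : set (R * R)) : is_gasket K ->
  forall N x, x \in VN R N -> K x.
Proof.
move=> gK N x; rewrite mem_undup => /flattenP [s /mapP [w _ ->]] /mapP [j _ ->].
elim: (val w) => [|a l IH] /=; first exact: avertK.
exact: phiK.
Qed.

Lemma size_flat3 (A B : Type) (f : A -> seq B) (s : seq A) :
  (forall a, size (f a) = 3%N) -> size (flatten (map f s)) = (3 * size s)%N.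
Proof. move=> hf; elim: s => [|a s IH] //=; rewrite size_cat IH hf mulnS. by []. Qed.

Lemma card_VT (R : realType) N : (#|{: seq_sub (VN R N)}| <= 3 * 3 ^ N)%N.
Proof.
rewrite card_seq_sub ?undup_uniq //.
apply: leq_trans (size_undup _) _.
rewrite size_flat3; last by move=> w; rewrite /cell size_map size_enum_ord.
by rewrite -cardT card_tuple card_ord.
Qed.

Lemma nu_ratio (R : realType) N (varrho : R * R -> R) (r : R) (eta : Omega R N) (x : VT R N) :
  (forall y : VT R N, 0 <= varrho (val y) <= 1) ->
  1 - varrho (val x) <= r * varrho (val x) ->
  varrho (val x) <= r * (1 - varrho (val x)) ->
  nu varrho (flip eta x) <= r * nu varrho eta.
Proof.
move=> h01 h1 h2.
rewrite /nu (bigD1 x) //= [X in _ <= r * X](bigD1 x) //=.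
have -> : \prod_(i | i != x) (if flip eta x i then varrho (val i) else 1 - varrho (val i))
        = \prod_(i | i != x) (if eta i then varrho (val i) else 1 - varrho (val i)).
  by apply: eq_bigr => i /negbTE hi; rewrite ffunE hi.
have hp : 0 <= \prod_(i | i != x) (if eta i then varrho (val i) else 1 - varrho (val i)).
  apply: prodr_ge0 => i _; have /andP [a b] := h01 i; case: (eta i) => //; by rewrite subr_ge0.
rewrite mulrA; apply: ler_wpM2r => //.
by rewrite ffunE eqxx; case: (eta x).
Qed.

Theorem proposition3p1 (R : realType) (rhoB : 'I_3 -> R) (M : R) :
  exists C : R, 0 < C /\
  forall (lp lm : 'I_3 -> R) (K : set (R * R)) (varrho : R * R -> R)
         (L0 : nat) (c : set (R * R) -> (R * R -> bool) -> R),
    (forall i, 0 < lp i) -> (forall i, 0 < lm i) ->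
    (forall i, rhoB i = lp i / (lp i + lm i)) ->
    is_gasket K ->
    in_F varrho ->
    (forall i, varrho (avert R i) = rhoB i) ->
    (forall x, K x -> \big[Num.min/rhoB ord0]_(i < 3) rhoB i <= varrho x) ->
    (exists x, K x /\ varrho x = \big[Num.min/rhoB ord0]_(i < 3) rhoB i) ->
    (forall x, K x -> varrho x <= \big[Num.max/rhoB ord0]_(i < 3) rhoB i) ->
    (exists x, K x /\ varrho x = \big[Num.max/rhoB ord0]_(i < 3) rhoB i) ->
    (1 <= L0)%N ->
    rate_family c ->
    cnorm c L0 = M ->
    forall (N : nat) (psi : Omega R N -> R),
      (1 <= N)%N ->
      Enu varrho (fun eta => psi eta ^+ 2) = 1 ->
      inner varrho psi (fun eta => - (5 ^+ N)^-1 * LG c L0 psi eta)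
        >= - C * (3 / 5) ^+ N.
Proof.
set rmin := \big[Num.min/rhoB ord0]_(i < 3) rhoB i.
set rmax := \big[Num.max/rhoB ord0]_(i < 3) rhoB i.
set r := rmax / (1 - rmax) + (1 - rmin) / rmin.
set r' := Num.max r 0.
set m' := Num.max M 0.
have r'0 : 0 <= r' by rewrite /r' le_max lexx orbT.
have m'0 : 0 <= m' by rewrite /m' le_max lexx orbT.
exists (1 + 3 / 2 * r' * m'); split.
  by apply: ltr_pwDl => //; rewrite !mulr_ge0.
move=> lp lm K varrho L0 c hlp hlm hrho gK _ hv0 hmin _ hmax _ hL0 rfc hM N psi hN hnorm.
have rb : forall i, 0 < rhoB i < 1.
  move=> i; rewrite hrho; apply/andP; split.
    by apply: divr_gt0 => //; apply: addr_gt0.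
  by rewrite ltr_pdivrMr ?addr_gt0 // mul1r ltrDl.
have rmin0 : 0 < rmin.
  rewrite /rmin; apply: (big_ind (fun x => 0 < x)).
  - by have /andP [] := rb ord0.
  - by move=> a b ha hb; rewrite lt_min ha hb.
  - by move=> i _; have /andP [] := rb i.
have rmax1 : rmax < 1.
  rewrite /rmax; apply: (big_ind (fun x => x < 1)).
  - by have /andP [] := rb ord0.
  - by move=> a b ha hb; rewrite gt_max ha hb.
  - by move=> i _; have /andP [] := rb i.
have vr : forall y : VT R N, rmin <= varrho (val y) <= rmax.
  move=> y; have Ky := VNK _ _ gK _ _ (ssvalP y).
  by rewrite hmin // hmax.
have h01 : forall y : VT R N, 0 <= varrho (val y) <= 1.
  move=> y; have /andP [a b] := vr y; apply/andP; split.
  - exact: le_trans (ltW rmin0) a.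
  - exact: le_trans b (ltW rmax1).
have rr : r <= r' by rewrite /r' le_max lexx.
have rmax0 : 0 < rmax.
  rewrite /rmax; apply: (big_ind (fun x => 0 < x)).
  - by have /andP [] := rb ord0.
  - by move=> a b ha hb; rewrite lt_max ha.
  - by move=> i _; have /andP [] := rb i.
have rmin1 : rmin < 1.
  rewrite /rmin; apply: (big_ind (fun x => x < 1)).
  - by have /andP [] := rb ord0.
  - by move=> a b ha hb; rewrite gt_min ha.
  - by move=> i _; have /andP [] := rb i.
have ratio : forall t, rmin <= t <= rmax -> (1 - t <= r' * t) /\ (t <= r' * (1 - t)).
  move=> t /andP [ht1 ht2].
  have a0 : 0 <= rmax / (1 - rmax).
    by apply: divr_ge0; [exact: ltW | rewrite subr_ge0; exact: ltW].
  have b0 : 0 <= (1 - rmin) / rmin.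
    by apply: divr_ge0; [rewrite subr_ge0; exact: ltW | exact: ltW].
  have ea : rmax / (1 - rmax) * (1 - rmax) = rmax.
    by rewrite divfK // subr_eq0 eq_sym lt_eqF.
  have eb : (1 - rmin) / rmin * rmin = 1 - rmin.
    by rewrite divfK // gt_eqF.
  have t0 : 0 <= t by apply: le_trans ht1; exact: ltW.
  have hrt : r * t <= r' * t by apply: ler_wpM2r.
  have hrt' : r * (1 - t) <= r' * (1 - t).
    by apply: ler_wpM2r => //; rewrite subr_ge0; apply: le_trans ht2 _; exact: ltW.
  rewrite /r in hrt hrt'.
  move: (rmax / (1 - rmax)) (( 1 - rmin) / rmin) a0 b0 ea eb hrt hrt' => a b a0 b0 ea eb hrt hrt'.
  have d1 : 0 <= t - rmin by rewrite subr_ge0.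
  have d2 : 0 <= rmax - t by rewrite subr_ge0.
  have h1 := mulr_ge0 b0 d1.
  have h2 := mulr_ge0 a0 d2.
  split; nra.
have hB := cbound R c L0 rfc.
have rateM : forall (x : VT R N) eta, val x \notin V0 R -> rate c L0 x eta <= M.
  move=> x eta hx; rewrite -hM /cnorm.
  have hub : has_ubound [set v | exists N (x : R * R) (xi : R * R -> bool),
          (1 <= N)%N /\ x \in VN R N /\ x \notin V0 R /\ v = c (Defs.shape N L0 x) xi].
    case: hB => B hB; exists B => v [N' [x' [xi [_ [_ [_ ->]]]]]]; exact: hB.
  apply: (ub_le_sup hub).
  exists N, (val x), (fun z => evc eta ((val x).1 + z.1 / 2 ^+ N, (val x).2 + z.2 / 2 ^+ N)).
  by split => //; split; [exact: ssvalP | split].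
have inv : forall x : seq_sub (VN R N), involutive (fun eta : Omega R N => flip eta x).
  move=> x eta; apply/ffunP => y; rewrite !ffunE.
  by case: (y == x) => //=; rewrite negbK.
have nu0 : forall t : Omega R N, 0 <= nu varrho t.
  move=> t; apply: prodr_ge0 => i _; have /andP [a b] := h01 i.
  by case: (t i) => //; rewrite subr_ge0.
have c0 : forall (x : seq_sub (VN R N)) (t : Omega R N), 0 <= rate c L0 x t.
  by move=> x t; exact: ltW ((proj1 rfc) _ _).
have cm : forall (x : seq_sub (VN R N)) (t : Omega R N), val x \notin V0 R -> rate c L0 x t <= m'.
  move=> x t hx; apply: le_trans (rateM x t hx) _; by rewrite /m' le_max lexx.
have nur : forall (x : seq_sub (VN R N)) (t : Omega R N), nu varrho (flip t x) <= r' * nu varrho t.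
  move=> x t; have [q1 q2] := ratio _ (vr x); exact: nu_ratio.
have hS := core R (Omega R N) (seq_sub (VN R N)) (nu varrho) (fun x eta => rate c L0 x eta) (fun x eta => flip eta x) psi
   (fun x => val x \notin V0 R) r' m' inv nu0 c0 cm nur r'0 m'0 hnorm.
have einner : inner varrho psi (fun eta => - (5 ^+ N)^-1 * LG c L0 psi eta)
   = - (5 ^+ N)^-1 * \sum_t nu varrho t * (psi t * LG c L0 psi t).
  by rewrite /inner /Enu mulr_sumr; apply: eq_bigr => t _; ring.
rewrite einner.
move: hS; set S := \sum_t _ => hS.
have hS' : S <= #|{: seq_sub (VN R N)}|%:R * (r' * m' / 2) by exact: hS.
have hc : (#|{: seq_sub (VN R N)}|%:R : R) <= 3 * 3 ^+ N.
  by rewrite -natrX -natrM ler_nat; exact: card_VT.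
have k0 : 0 <= r' * m' / 2 by rewrite !mulr_ge0 // invr_ge0 ler0n.
have hS2 : S <= 3 * 3 ^+ N * (r' * m' / 2).
  apply: le_trans hS' _; exact: ler_wpM2r.
have e35 : (3 / 5 : R) ^+ N = 3 ^+ N * (5 ^+ N)^-1 by rewrite exprMn exprVn.
rewrite e35.
have q0 : 0 <= (5 ^+ N : R)^-1 by rewrite invr_ge0 exprn_ge0 // ler0n.
have t0 : 0 <= (3 ^+ N : R) by rewrite exprn_ge0 // ler0n.
have h3 := ler_wpM2l q0 hS2.
have -> : 3 / 2 * r' * m' = 3 * (r' * m' / 2) by ring.
move: ((5 ^+ N : R)^-1) (3 ^+ N : R) (r' * m' / 2) q0 t0 k0 h3 => q t k q0 t0 k0 h3.
have hqt := mulr_ge0 t0 q0.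
nra.
Qed.
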